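(* Let $a_1<a_2$ be positive integers and let $g=\gcd(a_1,a_2)$. For generic $(c_1,c_2)\in\mathbb{C}^2$, the number of common solutions $(x_1,x_2)\in\mathbb{C}^2$ of the equations $x_1^{a_1}+x_2^{a_1}=c_1$ and $x_1^{a_2}+x_2^{a_2}=c_2$ equals $a_1(a_2-g)$ if both $a_1/g$ and $a_2/g$ are odd, and equals $a_1a_2$ otherwise. *)

(* Defs.v *)
From HB Require Import structures.
From mathcomp Require Import all_boot all_order all_algebra.
From mathcomp Require Import Rstruct complex.
From Stdlib Require Import Rdefinitions.
Set Implicit Arguments. Unset Strict Implicit. Unset Printing Implicit Defensive.
Import Order.TTheory GRing.Theory Num.Theory.
Local Open Scope ring_scope.

Definition C : Type := (Rdefinitions.R)[i].

Definition is_solution (a1 a2 : nat) (c1 c2 : C) (x : C * C) : Prop :=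
  x.1 ^+ a1 + x.2 ^+ a1 = c1 /\ x.1 ^+ a2 + x.2 ^+ a2 = c2.

Definition num_solutions_eq (a1 a2 : nat) (c1 c2 : C) (N : nat) : Prop :=
  exists s : seq (C * C), uniq s /\ size s = N /\
    (forall x : C * C, x \in s <-> is_solution a1 a2 c1 c2 x).

(* Evaluation of a bivariate polynomial P(y1, y2), encoded as a polynomial in
   y2 with coefficients polynomials in y1, at the point (c1, c2). *)
Definition eval2 (P : {poly {poly C}}) (c1 c2 : C) : C := (P.[c2%:P]).[c1].

(* A property holds for generic (c1, c2) in C^2: it holds outside the zero
   locus of some nonzero polynomial (a proper Zariski-closed subset). *)
Definition generically (Q : C -> C -> Prop) : Prop :=
  exists P : {poly {poly C}}, P != 0 /\
    forall c1 c2 : C, eval2 P c1 c2 != 0 -> Q c1 c2.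

(* Main.v *)
Require Import Defs.
From mathcomp Require Import all_boot all_order all_algebra all_field.
From mathcomp Require Import Rstruct complex ring lra zify.
Import Order.TTheory GRing.Theory Num.Theory.
Local Open Scope ring_scope.

Definition rootsl (p : {poly C}) : seq C := sval (closed_field_poly_normal p).

Lemma rootsl_prop (p : {poly C}) : p != 0 ->
  (forall x, root p x -> root p^`() x -> False) ->
  [/\ uniq (rootsl p), size (rootsl p) = (size p).-1 &
      forall x, (x \in rootsl p) = root p x].
Proof.
move=> p0 H; rewrite /rootsl; case: (closed_field_poly_normal p) => rs Hp /=.
have lc0 : lead_coef p != 0 by rewrite lead_coef_eq0.
split.
- rewrite -separable_prod_XsubC; apply: (dvdp_separable (p := p)).
    by rewrite {1}Hp dvdpZr.
  rewrite unlock /separable_poly; apply: Pdiv.ClosedField.root_coprimep => x rx.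
  by apply/negP => H2; apply: (H x rx).
- by rewrite {1}Hp size_scale // size_prod_XsubC.
- by move=> x; rewrite {1}Hp rootZ // root_prod_XsubC.
Qed.

Lemma XnsubC_nocommon (g : nat) (w : C) : (0 < g)%N -> w != 0 ->
  forall x, root ('X^g - w%:P) x -> root ('X^g - w%:P)^`() x -> False.
Proof.
move=> g0 w0 x; rewrite derivB derivC subr0 derivXn !rootE !hornerE.
move=> /eqP H1.
rewrite hornerMn hornerXn mulrn_eq0 (negbTE (lt0n_neq0 g0)) /= expf_eq0.
case: g g0 H1 => // [[|k]] _ /=.
  by [].
move=> H1 /eqP x0; move: H1; rewrite x0 expr0n /= sub0r => /eqP.
by rewrite oppr_eq0 (negbTE w0).
Qed.

Lemma pow_w (A B : C) (b1 b2 u v : nat) : (0 < b1)%N -> A != 0 -> B != 0 ->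
  A ^+ b2 = B ^+ b1 -> (u * b1 = v * b2 + 1)%N ->
  [/\ (A ^+ u / B ^+ v) ^+ b1 = A, (A ^+ u / B ^+ v) ^+ b2 = B &
      forall y, y ^+ b1 = A -> y ^+ b2 = B -> y = A ^+ u / B ^+ v].
Proof.
move=> b10 A0 B0 AB Huv.
have eA : A ^+ (u * b1) = (B ^+ (v * b1)) * A.
  by rewrite Huv exprD expr1 [(v * b2)%N]mulnC exprM AB -exprM mulnC.
have eB : A ^+ (u * b2) = (B ^+ (v * b2)) * B.
  by rewrite [(u * b2)%N]mulnC exprM AB -exprM mulnC Huv exprD expr1.
have BV k : B ^+ k != 0 by rewrite expf_neq0.
split.
- by rewrite exprMn exprVn -!exprM eA mulrAC mulfV // mul1r.
- by rewrite exprMn exprVn -!exprM eB mulrAC mulfV // mul1r.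
move=> y yA yB.
have y0 : y != 0 by apply: contraNneq A0 => y0; rewrite -yA y0 expr0n gtn_eqF.
apply/(@mulIf _ (B ^+ v)); first exact: BV.
rewrite divfK // -yB -yA -!exprM.
have : y ^+ (u * b1) = y ^+ (v * b2) * y by rewrite Huv exprD expr1.
by rewrite mulnC [(b2 * v)%N]mulnC => ->; rewrite mulrC.
Qed.

Lemma res_nocommon (p q : {poly C}) (x : C) : resultant p q != 0 -> p != 0 ->
  root p x -> root q x -> False.
Proof.
move=> r0 p0 rp rq; move: r0; rewrite resultant_eq0.
have g0 : gcdp p q != 0 by rewrite gcdp_eq0 negb_and p0.
have : root (gcdp p q) x by rewrite root_gcd rp rq.
by move=> /(root_size_gt1 g0) ->.
Qed.

Lemma nocommon_res (p q : {poly C}) :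
  (forall x, root p x -> root q x -> False) -> resultant p q != 0.
Proof.
move=> H; rewrite resultant_eq0; apply/negP => gt1.
move: (gtn_eqF gt1) => /negbT /closed_rootP [x].
by rewrite root_gcd => /andP[] /H.
Qed.

Lemma size_deriv_C (p : {poly C}) : size p^`() = (size p).-1.
Proof.
have [p0|p0] := eqVneq p 0; first by rewrite p0 deriv0 size_poly0.
apply/anti_leq/andP; split.
  by have := lt_size_deriv p0; case: (size p).
case sp: (size p) => [|[|n]] //=.
rewrite ltnNge; apply/negP => /leq_sizeP /(_ n (leqnn n)) /eqP.
rewrite coef_deriv mulrn_eq0 /=.
have -> : p`_n.+1 = lead_coef p by rewrite lead_coefE sp.
by rewrite lead_coef_eq0 (negbTE p0).
Qed.

Lemma lead_map_nz (aR : nzRingType) (rR : idomainType) (f : {rmorphism aR -> rR})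
  (p : {poly aR}) : (size p <= size (map_poly f p))%N -> map_poly f p != 0 ->
  f (lead_coef p) != 0.
Proof.
move=> H m0.
have e : size (map_poly f p) = size p.
  by apply/anti_leq; rewrite H andbT /map_poly size_poly.
by rewrite lead_coefE -coef_map -e -lead_coefE lead_coef_eq0.
Qed.
Section Expand.
Variable R : comNzRingType.

Lemma size_XasubC (a : nat) (c : R) : (size ('X^a - c%:P)%R <= a.+1)%N.
Proof.
apply: leq_trans (size_polyD _ _) _; rewrite size_polyXn size_polyN geq_max leqnn /=.
by apply: leq_trans (size_polyC_leq1 _) _.
Qed.

Lemma size_mulXa (a n : nat) (S : {poly R}) (c : R) : (size S <= n.+1)%N ->
  (size (S * ('X^a - c%:P))%R <= (n + a).+1)%N.
Proof.
move=> HS; apply: leq_trans (size_polyMleq _ _) _.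
have Ha := size_XasubC a c.
have -> : (n + a).+1 = (n.+1 + a.+1).-1 by rewrite addSn addnS.
by rewrite -!subn1 leq_sub2r // leq_add.
Qed.

Lemma size_scaleXn (k : R) (n : nat) : (size (k *: ('X^n : {poly R}))%R <= n.+1)%N.
Proof. by apply: leq_trans (size_scale_leq _ _) _; rewrite size_polyXn. Qed.

Lemma expand1 (a : nat) (c : R) m :
  (size (('X^a - c%:P) ^+ m.+1 - 'X^(a * m.+1))%R <= (a * m).+1)%N.
Proof.
elim: m => [|m IH].
  by rewrite expr1 muln1 muln0 addrAC subrr add0r size_polyN size_polyC_leq1.
set S := _ - _ in IH.
have -> : ('X^a - c%:P) ^+ m.+2 - 'X^(a * m.+2) =
          S * ('X^a - c%:P) - c *: 'X^(a * m.+1).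
  rewrite /S mulrBl -exprSr mulrBr -exprD mulrC mul_polyC -mulnSr.
  by rewrite opprB addrA addrAC addrK.
apply: leq_trans (size_polyD _ _) _; rewrite geq_max size_polyN.
by rewrite size_scaleXn andbT mulnSr size_mulXa.
Qed.

Definition Uk (a : nat) (c : R) k : {poly R} :=
  ('X^a - c%:P) ^+ k.+1 - 'X^(a * k.+1) + (c *+ k.+1) *: 'X^(a * k).

Lemma Uk_rec a c k : Uk a c k.+1 = Uk a c k * ('X^a - c%:P) + (c ^+ 2 *+ k.+1) *: 'X^(a * k).
Proof.
rewrite /Uk exprS mulnSr [(a * k.+1)%N]mulnSr !exprD -!mul_polyC !polyCMn rmorphXn.
set Y := 'X^(a * k); set Z := 'X^a; set P := ('X^a - c%:P) ^+ k.+1.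
rewrite -/Z; ring.
Qed.

Lemma expand2 (a : nat) (c : R) k : (size (Uk a c k.+1) <= (a * k).+1)%N.
Proof.
elim: k => [|k IH].
  rewrite Uk_rec /Uk muln0 muln1 expr1.
  have -> : 'X^a - c%:P - 'X^a + (c *+ 1) *: 'X^0 = 0 :> {poly R}.
    by rewrite expr0 -mul_polyC mulr1 mulr1n; ring.
  by rewrite mul0r add0r size_scaleXn.
rewrite Uk_rec; apply: leq_trans (size_polyD _ _) _.
by rewrite geq_max size_scaleXn andbT mulnSr size_mulXa.
Qed.

End Expand.
Arguments expand1 {R}. Arguments expand2 {R}. Arguments Uk {R}. Arguments Uk_rec {R}.
Arguments size_scaleXn {R}. Arguments size_mulXa {R}.

Lemma negpow (R : comNzRingType) (a n : nat) (c : R) :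
  (c%:P - 'X^a) ^+ n = ((-1) ^+ n)%:P * ('X^a - c%:P) ^+ n.
Proof. by rewrite -opprB [LHS]exprNn rmorphXn rmorphN rmorph1. Qed.


Lemma alg10 (t : C) (n1 n2 m1 m2 : nat) : (0 < n1)%N -> (0 < n2)%N -> (0 < m1)%N ->
  (0 < m2)%N -> (n1 * m2 = n2 * m1)%N ->
  (1 - t ^+ n1) ^+ m2 - (- t ^+ n2) ^+ m1 == 0 ->
  t ^+ n1.-1 *- n1 * (1 - t ^+ n1) ^+ m2.-1 *+ m2 -
  t ^+ n2.-1 *- n2 * (- t ^+ n2) ^+ m1.-1 *+ m1 == 0 -> False.
Proof.
case: n1 => // k1 _; case: n2 => // k2 _; case: m1 => // j1 _; case: m2 => // j2 _.
move=> eN; rewrite subr_eq0 => /eqP H1 /eqP H2.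
have t0 : t != 0.
  apply/negP => /eqP t0; move: H1; rewrite t0 !expr0n /= subr0 oppr0 expr1n expr0n /=.
  by move/eqP; rewrite oner_eq0.
have eN' : (k1.+1%:R * j2.+1%:R : C) = k2.+1%:R * j1.+1%:R by rewrite -!natrM eN.
rewrite !exprS in H1 H2 t0 *; rewrite /= in H2.
set X1 := t ^+ k1 in H1 H2; set X2 := t ^+ k2 in H1 H2.
set PA := (1 - t * X1) ^+ j2 in H1 H2; set PB := (- (t * X2)) ^+ j1 in H1 H2.
have X20 : X2 != 0 by rewrite expf_neq0.
have Q0 : (- (t * X2)) * PB != 0.
  by rewrite mulf_neq0 ?oppr_eq0 ?mulf_neq0 // /PB expf_neq0 // oppr_eq0 mulf_neq0.
have r1 : t * (1 - t * X1) * (- (t * X2)) *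
   (X1 *- k1.+1 * PA *+ j2.+1 - X2 *- k2.+1 * PB *+ j1.+1) =
   - (t * X1) * (k1.+1%:R * j2.+1%:R) * (- (t * X2)) * ((1 - t * X1) * PA) +
   t * X2 * (k2.+1%:R * j1.+1%:R) * (1 - t * X1) * ((- (t * X2)) * PB).
  by ring.
rewrite H2 mulr0 H1 -eN' in r1.
have r2 : 0 = ((- (t * X2)) * PB) * (k1.+1%:R * j2.+1%:R) * t * X2 by rewrite r1; ring.
move/eqP: r2; rewrite eq_sym; apply/negP.
have B0 : - (t * X2) != 0 by rewrite oppr_eq0 mulf_neq0.
have PB0 : PB != 0 by rewrite /PB expf_neq0.
by rewrite !mulf_neq0 // pnatr_eq0.
Qed.

Section Main.
Variables (g b1 b2 : nat).
Hypotheses (g0 : (0 < g)%N) (b10 : (0 < b1)%N) (b12 : (b1 < b2)%N)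
  (cop : coprime b1 b2).
Let a1 := (b1 * g)%N.
Let a2 := (b2 * g)%N.
Let L := (b1 * b2 * g)%N.
Let oddc := odd b1 && odd b2.
Let N := if oddc then (a1 * b2.-1)%N else L.

Lemma eL1 : (a1 * b2 = L)%N.
Proof. by rewrite /a1 /L mulnAC. Qed.
Lemma eL2 : (a2 * b1 = L)%N.
Proof. by rewrite /a2 /L mulnAC [(b2 * b1)%N]mulnC. Qed.

Definition Fp {R : comNzRingType} (c1 c2 : R) : {poly R} :=
  (c1%:P - 'X^a1) ^+ b2 - (c2%:P - 'X^a2) ^+ b1.

Definition kappa {R : comNzRingType} (c1 : R) : R :=
  if oddc then c1 *+ b2 else (-1) ^+ b2 - (-1) ^+ b1.

Lemma Fp_dec (R : comNzRingType) (c1 c2 : R) :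
  (size (Fp c1 c2 - kappa c1 *: 'X^N)%R <= N)%N.
Proof.
have a1p : (0 < a1)%N by rewrite muln_gt0 b10.
have a12 : (a1 < a2)%N by rewrite ltn_pmul2r.
rewrite /Fp /kappa /N !negpow.
have [m1 eb1] : exists m1, b1 = m1.+1 by exists b1.-1; rewrite prednK.
have [m2 eb2] : exists m2, b2 = m2.+1.
  by exists b2.-1; rewrite prednK //; apply: leq_trans b12.
have eL1' := eL1; have eL2' := eL2; rewrite eb1 in eL2' *; rewrite eb2 in eL1' *.
have S1 := expand1 a1 c1 m2; have S2 := expand1 a2 c2 m1.
rewrite eL1' in S1; rewrite eL2' in S2.
set s1 := _ - _ in S1; set s2 := _ - _ in S2.
have e1 : ('X^a1 - c1%:P) ^+ m2.+1 = s1 + 'X^L by rewrite subrK.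
have e2 : ('X^a2 - c2%:P) ^+ m1.+1 = s2 + 'X^L by rewrite subrK.
case: ifP => Hodd.
  have o1 : odd m1.+1 by move: Hodd; rewrite /oddc eb1 => /andP[].
  have o2 : odd m2.+1 by move: Hodd; rewrite /oddc eb2 => /andP[].
  have [k ek] : exists k, m2 = k.+1.
    by exists m2.-1; rewrite prednK //; move: b12; rewrite eb1 eb2 ltnS; apply: leq_trans.
  rewrite -[(-1) ^+ m2.+1]signr_odd -[(-1) ^+ m1.+1]signr_odd o1 o2 expr1 /=.
  have U2 := expand2 a1 c1 k; rewrite -ek in U2.
  set U := Uk a1 c1 m2 in U2.
  have eU : ('X^a1 - c1%:P) ^+ m2.+1 = U + 'X^L - (c1 *+ m2.+1) *: 'X^(a1 * m2).
    rewrite /U /Uk eL1'; set K := (_ *: _); ring.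
  have -> : (-1)%:P * ('X^a1 - c1%:P) ^+ m2.+1 - (-1)%:P * ('X^a2 - c2%:P) ^+ m1.+1 -
      (c1 *+ m2.+1) *: 'X^(a1 * m2) = s2 - U.
    rewrite eU e2; set K := (_ *: _); ring.
  apply: leq_trans (size_polyD _ _) _; rewrite size_polyN geq_max.
  apply/andP; split.
    by apply: leq_trans S2 _; move: eL1' eL2' a12; rewrite ek !mulnS; lia.
  by apply: leq_trans U2 _; move: a1p; rewrite ek !mulnS; lia.
have -> : ((-1) ^+ m2.+1)%:P * ('X^a1 - c1%:P) ^+ m2.+1 -
    ((-1) ^+ m1.+1)%:P * ('X^a2 - c2%:P) ^+ m1.+1 -
    ((-1) ^+ m2.+1 - (-1) ^+ m1.+1) *: 'X^L =
    ((-1) ^+ m2.+1) *: s1 - ((-1) ^+ m1.+1) *: s2.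
  rewrite e1 e2 -!mul_polyC rmorphB /=; ring.
apply: leq_trans (size_polyD _ _) _; rewrite size_polyN geq_max.
apply/andP; split; apply: leq_trans (size_scale_leq _ _) _.
  by apply: leq_trans S1 _; rewrite -eL1' mulnS; move: a1p; lia.
by apply: leq_trans S2 _; rewrite -eL2' mulnS; move: a1p a12; lia.
Qed.

Lemma Fp_size_le (R : comNzRingType) (c1 c2 : R) : (size (Fp c1 c2) <= N.+1)%N.
Proof.
rewrite -[Fp c1 c2](subrK (kappa c1 *: 'X^N)).
apply: leq_trans (size_polyD _ _) _; rewrite geq_max size_scaleXn andbT.
by apply: leq_trans (Fp_dec _ c1 c2) _.
Qed.

Lemma Fp_size_eq (c1 c2 : C) : kappa c1 != 0 -> size (Fp c1 c2) = N.+1.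
Proof.
move=> k0; rewrite -[Fp c1 c2](subrK (kappa c1 *: 'X^N)) addrC size_polyDl.
  by rewrite size_scale // size_polyXn.
by rewrite size_scale // size_polyXn ltnS (Fp_dec _ c1 c2).
Qed.

Lemma N_gt0 : (0 < N)%N.
Proof.
rewrite /N; case: ifP => _.
  rewrite muln_gt0 /a1 muln_gt0 b10 g0 /=.
  by case: b2 b12 b10 => [|[|]] //; case: b1.
by rewrite /L !muln_gt0 b10 g0 (leq_trans _ b12).
Qed.

Lemma kappa_nz (c1 : C) : c1 != 0 -> kappa c1 != 0.
Proof.
move=> c10; rewrite /kappa; case: ifP => Ho.
  by rewrite mulrn_eq0 negb_or c10 andbT -lt0n (leq_trans _ b12).
have Hpar : odd b1 != odd b2.
  apply/negP => /eqP e; move: Ho; rewrite /oddc -e andbb => /negbT Hb.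
  move: cop; rewrite /coprime => /eqP H.
  have : (2 %| gcdn b1 b2)%N by rewrite dvdn_gcd !dvdn2 -e Hb.
  by rewrite H.
rewrite -[(-1) ^+ b2]signr_odd -[(-1) ^+ b1]signr_odd.
case: (odd b1) (odd b2) Hpar => [] [] //= _; rewrite ?expr0 ?expr1.
  by rewrite opprK -mulr2n mulrn_eq0 oner_eq0.
by rewrite -opprD oppr_eq0 -mulr2n mulrn_eq0 oner_eq0.
Qed.


Definition C1 : {poly {poly C}} := ('X)%:P.
Definition C2 : {poly {poly C}} := 'X.
Definition FK := Fp C1 C2.
Definition DK := resultant FK FK^`().
Definition PK := DK * C1 * (C1 ^+ b2 - C2 ^+ b1).
Definition ev (c1 c2 : C) : {rmorphism {poly {poly C}} -> C} :=
  horner_eval c1 \o horner_eval c2%:P.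

Lemma evE c1 c2 x : ev c1 c2 x = eval2 x c1 c2.
Proof. by []. Qed.
Lemma ev_C1 c1 c2 : ev c1 c2 C1 = c1.
Proof. by rewrite /ev /= !horner_evalE /C1 hornerC hornerX. Qed.
Lemma ev_C2 c1 c2 : ev c1 c2 C2 = c2.
Proof. by rewrite /ev /= !horner_evalE /C2 hornerX hornerC. Qed.

Lemma map_FK c1 c2 : map_poly (ev c1 c2) FK = Fp c1 c2.
Proof.
rewrite /FK /Fp rmorphB /= !rmorphXn /= !rmorphB /= !map_polyC !map_polyXn /=.
by rewrite !horner_evalE /C1 /C2 hornerC hornerX hornerX hornerC.
Qed.

Lemma ev_DK c1 c2 : kappa c1 != 0 ->
  ev c1 c2 DK = resultant (Fp c1 c2) (Fp c1 c2)^`().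
Proof.
move=> k0.
have sF := Fp_size_eq c1 c2 k0.
have mF0 : map_poly (ev c1 c2) FK != 0 by rewrite map_FK -size_poly_eq0 sF.
have FK0 : FK != 0 by apply: contraNneq mF0 => ->; rewrite map_poly0.
rewrite /DK map_resultant; first by rewrite -deriv_map map_FK.
  by apply: lead_map_nz => //; rewrite map_FK sF Fp_size_le.
apply: lead_map_nz; rewrite -deriv_map map_FK ?size_deriv_C ?sF /=.
  by rewrite -ltnS (leq_trans (lt_size_deriv FK0)) // Fp_size_le.
by rewrite -size_poly_eq0 size_deriv_C sF /= -lt0n N_gt0.
Qed.

Lemma res10 : resultant (Fp (1 : C) 0) (Fp (1 : C) 0)^`() != 0.
Proof.
apply: nocommon_res => x; rewrite /Fp derivB !deriv_exp !derivB !derivC !derivXn !rootE.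
rewrite !hornerE /= !(hornerMn, hornerN, hornerM, horner_exp, hornerXn, hornerC, hornerD, hornerX).
apply: alg10.
- by rewrite /a1 muln_gt0 b10.
- by rewrite /a2 muln_gt0 g0 (leq_trans _ b12).
- exact: b10.
- exact: (leq_trans _ b12).
- by rewrite eL1 eL2.
Qed.


Lemma PK_nz : PK != 0.
Proof.
apply/negP => /eqP P0; have := congr1 (ev 1 0) P0.
rewrite rmorph0 /PK !rmorphM rmorphB !rmorphXn ev_C1 ev_C2 ev_DK ?kappa_nz ?oner_eq0 //.
rewrite expr1n expr0n gtn_eqF // subr0 !mulr1 => /eqP.
by rewrite (negbTE res10).
Qed.

Lemma count_main (c1 c2 : C) : ev c1 c2 PK != 0 ->
  num_solutions_eq a1 a2 c1 c2 (g * N).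
Proof.
rewrite /PK !rmorphM rmorphB !rmorphXn ev_C1 ev_C2.
move=> H; have /andP[H' Q0] : (ev c1 c2 DK * c1 != 0) && (c1 ^+ b2 - c2 ^+ b1 != 0).
  by apply/andP; split; apply: contraNneq H => ->; rewrite ?mulr0 ?mul0r.
have /andP[D0 c10] : (ev c1 c2 DK != 0) && (c1 != 0).
  by apply/andP; split; apply: contraNneq H' => ->; rewrite ?mulr0 ?mul0r.
have k0 := kappa_nz _ c10.
rewrite ev_DK // in D0.
set F := Fp c1 c2 in D0.
have sF : size F = N.+1 by apply: Fp_size_eq.
have F0 : F != 0 by rewrite -size_poly_eq0 sF.
have nc : forall x, root F x -> root F^`() x -> False.
  by move=> x; apply: (res_nocommon _ _ _ D0 F0).
have [rsU rsS rsR] := rootsl_prop _ F0 nc.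
have [u v Huv _] := egcdnP b2 b10.
rewrite (eqP cop) in Huv.
pose A t := c1 - t ^+ a1; pose B t := c2 - t ^+ a2.
pose w t := A t ^+ u / B t ^+ v.
have rootFE t : root F t = (A t ^+ b2 == B t ^+ b1).
  by rewrite rootE /F /Fp !hornerE subr_eq0.
have b20 : (0 < b2)%N by apply: leq_trans b12.
have rootAB t : root F t -> [/\ A t != 0, B t != 0 & A t ^+ b2 = B t ^+ b1].
  rewrite rootFE => /eqP AB.
  have A0 : A t != 0.
    apply/negP => /eqP A0; move: AB; rewrite A0 expr0n gtn_eqF // => /esym /eqP.
    rewrite expf_eq0 b10 /= => /eqP B0.
    move: Q0; rewrite -(subrK (t ^+ a1) c1) -/(A t) A0 add0r.
    rewrite -(subrK (t ^+ a2) c2) -/(B t) B0 add0r -!exprM.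
    by rewrite [(a1 * b2)%N]eL1 [(a2 * b1)%N]eL2 subrr eqxx.
  split => //; apply/negP => /eqP B0; move: AB; rewrite B0 expr0n gtn_eqF // => /eqP.
  by rewrite expf_eq0 b20 /= (negbTE A0).
have wP t : root F t -> [/\ w t != 0 &
    forall x, (x ^+ a1 = A t /\ x ^+ a2 = B t) <-> x ^+ g = w t].
  move=> /rootAB [A0 B0 AB].
  have [w1 w2 wu] := pow_w _ _ _ _ _ _ b10 A0 B0 AB Huv.
  split.
    by apply/negP => /eqP w0; move: w1; rewrite -/(w t) w0 expr0n gtn_eqF // => /esym /eqP; rewrite (negbTE A0).
  move=> x; split.
    move=> [x1 x2]; apply: wu; rewrite -exprM mulnC; [exact: x1 | exact: x2].
  by move=> xg; rewrite /a1 /a2 mulnC exprM xg mulnC exprM xg -/(w t).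
pose inner t := rootsl ('X^g - (w t)%:P).
have innerP t : root F t -> [/\ uniq (inner t), size (inner t) = g &
    forall x, (x \in inner t) = (x ^+ g == w t)].
  move=> /wP [w0 _].
  have p0 : 'X^g - (w t)%:P != 0 by rewrite -size_poly_eq0 size_XnsubC.
  have [iU iS iR] := rootsl_prop _ p0 (XnsubC_nocommon _ _ g0 w0).
  split => //; first by rewrite iS size_XnsubC.
  by move=> x; rewrite iR rootE !hornerE subr_eq0.
exists [seq (t, x) | t <- rootsl F, x <- inner t]; split; [|split].
- apply: allpairs_uniq_dep => //.
    by move=> t; rewrite rsR => /innerP [].
  by move=> [t1 x1] [t2 x2] _ _ /= [e1 e2]; subst.
- rewrite size_allpairs_dep.
  have -> : [seq size (inner t) | t <- rootsl F] = [seq g | t <- rootsl F].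
    by apply/eq_in_map => t; rewrite rsR => /innerP [].
  have sc (s0 : seq C) : sumn [seq g | _ <- s0] = (g * size s0)%N.
    by elim: s0 => [|? ? IH] /=; rewrite ?muln0 // IH mulnS.
  by rewrite sc rsS sF.
move=> [x1 x2]; split.
  move=> /allpairsPdep [t [x [tin xin [-> ->]]]].
  move: tin; rewrite rsR => rt; have [_ _ iR] := innerP t rt.
  have [_ wE] := wP t rt.
  move: xin; rewrite iR => /eqP /wE [e1 e2].
  by split; rewrite /= ?e1 ?e2 /A /B addrC subrK.
move=> [/= e1 e2].
have eA : A x1 = x2 ^+ a1 by rewrite /A -e1 addrAC subrr add0r.
have eB : B x1 = x2 ^+ a2 by rewrite /B -e2 addrAC subrr add0r.
have rt : root F x1.
  rewrite rootFE eA eB -!exprM.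
  by rewrite [(a1 * b2)%N]eL1 [(a2 * b1)%N]eL2.
apply/allpairsPdep; exists x1, x2; split => //; first by rewrite rsR.
have [_ _ iR] := innerP x1 rt; have [_ wE] := wP x1 rt.
by rewrite iR; apply/eqP/wE; split.
Qed.

End Main.

Theorem proposition3p3 (a1 a2 : nat) (h1 : (0 < a1)%N) (h12 : (a1 < a2)%N) :
  let g := gcdn a1 a2 in
  generically (fun c1 c2 => num_solutions_eq a1 a2 c1 c2
    (if odd (a1 %/ g) && odd (a2 %/ g) then a1 * (a2 - g) else a1 * a2)%N).
Proof.
move=> g.
have g0 : (0 < g)%N by rewrite gcdn_gt0 h1.
have ea1 : a1 = (a1 %/ g * g)%N by rewrite divnK // dvdn_gcdl.
have ea2 : a2 = (a2 %/ g * g)%N by rewrite divnK // dvdn_gcdr.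
set b1 := (a1 %/ g)%N in ea1 *; set b2 := (a2 %/ g)%N in ea2 *.
have b10 : (0 < b1)%N by move: h1; rewrite ea1 muln_gt0 => /andP[].
have b12 : (b1 < b2)%N by move: h12; rewrite ea1 ea2 ltn_pmul2r.
have cop : coprime b1 b2.
  by rewrite /coprime -(eqn_pmul2r g0) muln_gcdl -ea1 -ea2 mul1n.
exists (PK g b1 b2); split; first exact: PK_nz.
move=> c1 c2 H; rewrite -evE in H.
have := @count_main g b1 b2 g0 b10 b12 cop c1 c2 H; rewrite -ea1 -ea2.
congr num_solutions_eq.
case: ifP => _.
  rewrite ea1 ea2; have -> : (b2 * g - g = b2.-1 * g)%N by rewrite -{2}(mul1n g) -mulnBl subn1.
  ring.
rewrite ea1 ea2; nia.
Qed.
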